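(* Consider the DAGP iteration described in the context, with parameters $\mu,\rho,\alpha>0$. Assume $\mathbf{W}$ has zero row sums, $\mathbf{Q}$ has zero column sums, $\ker(\mathbf{Q})=\ker(\mathbf{W}^T)$, and $\ker(\mathbf{W})=\mathrm{span}\{\mathbf{1}_M\}$. Let $(\mathbf{x}^v,\mathbf{g}^v,\mathbf{h}^v)_{v=1}^M$ be a fixed point of the DAGP iteration (i.e. if $(\mathbf{x}^v_k,\mathbf{g}^v_k,\mathbf{h}^v_k)=(\mathbf{x}^v,\mathbf{g}^v,\mathbf{h}^v)$ for all $v$, then the update produces $(\mathbf{x}^v_{k+1},\mathbf{g}^v_{k+1},\mathbf{h}^v_{k+1})=(\mathbf{x}^v,\mathbf{g}^v,\mathbf{h}^v)$ for all $v$) with $\sum_{v=1}^M\mathbf{h}^v=\mathbf{0}$. Then there is $\mathbf{x}\in\bigcap_{v=1}^M S^v$ with $\mathbf{x}^v=\mathbf{x}$ for all $v$, and $$\mathbf{0}\in\sum_{v=1}^M\big(\partial I_{S^v}(\mathbf{x})+\nabla f^v(\mathbf{x})\big),$$ so that $\mathbf{x}$ is an optimal solution of $\min_{\mathbf{x}\in\mathbb{R}^m}\frac1M\sum_{v=1}^Mf^v(\mathbf{x})$ subject to $\mathbf{x}\in\bigcap_{v=1}^MS^v$.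
   Context: There are $M$ agents $v\in\{1,\dots,M\}$. Each agent has a convex differentiable function $f^v:\mathbb{R}^m\to\mathbb{R}$ and a nonempty closed convex set $S^v\subseteq\mathbb{R}^m$. $\mathrm{P}_S(\mathbf{y})=\arg\min_{\mathbf{x}\in S}\|\mathbf{x}-\mathbf{y}\|_2$ is the Euclidean projection onto $S$. The normal cone is $\partial I_S(\mathbf{x})=\{\mathbf{g}:\mathbf{g}^T(\mathbf{z}-\mathbf{x})\le 0\ \forall \mathbf{z}\in S\}$ for $\mathbf{x}\in S$ and $\emptyset$ otherwise; the sum of sets is the Minkowski sum. $\mathbf{W}=[w_{vu}]$ and $\mathbf{Q}=[q_{vu}]$ are real $M\times M$ matrices. DAGP (Double Averaging and Gradient Projection) with parameters $\mu,\rho,\alpha>0$ maintains, for each agent $v$, vectors $\mathbf{x}^v_k,\mathbf{g}^v_k,\mathbf{h}^v_k\in\mathbb{R}^m$ and updates, for $k\ge0$ and all $v$: $\mathbf{z}^v_{k+1}=\mathbf{x}^v_k-\sum_{u=1}^M w_{vu}\mathbf{x}^u_k-\mu(\nabla f^v(\mathbf{x}^v_k)-\mathbf{g}^v_k)$; $\mathbf{x}^v_{k+1}=\mathrm{P}_{S^v}(\mathbf{z}^v_{k+1})$; $\mathbf{g}^v_{k+1}=\mathbf{g}^v_k+\rho\big[\nabla f^v(\mathbf{x}^v_k)-\mathbf{g}^v_k+\tfrac1\mu(\mathbf{z}^v_{k+1}-\mathbf{x}^v_{k+1})\big]+\alpha(\mathbf{h}^v_k-\mathbf{g}^v_k)$;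 $\mathbf{h}^v_{k+1}=\mathbf{h}^v_k-\sum_{u=1}^M q_{vu}(\mathbf{h}^u_k-\mathbf{g}^u_k)$. *)

(* Defs.v *)
From HB Require Import structures.
From mathcomp Require Import all_boot all_order all_algebra.
From mathcomp Require Import all_classical all_reals all_analysis.
Set Implicit Arguments. Unset Strict Implicit. Unset Printing Implicit Defensive.
Import Order.TTheory GRing.Theory Num.Theory.
Import numFieldNormedType.Exports.
Local Open Scope classical_set_scope.
Local Open Scope ring_scope.

Section DAGPDefs.
Variable R : realType.
Variable m : nat.
Notation vec := 'rV[R]_m.

Definition dotv (u v : vec) : R := \sum_(i < m) u 0 i * v 0 i.
Definition sqnorm2 (u : vec) : R := dotv u u.

Definition cvx_set (S : set vec) : Prop :=
  forall x y (t : R), S x -> S y -> 0 <= t <= 1 -> S (t *: x + (1 - t) *: y).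

Definition cvx_fun (f : vec -> R) : Prop :=
  forall x y (t : R), 0 <= t <= 1 ->
    f (t *: x + (1 - t) *: y) <= t * f x + (1 - t) * f y.

Definition is_gradient (f : vec -> R) (df : vec -> vec) : Prop :=
  forall x, differentiable f x /\ forall d : vec, 'D_d f x = dotv (df x) d.

Definition is_proj (S : set vec) (y p : vec) : Prop :=
  S p /\ forall z, S z -> sqnorm2 (p - y) <= sqnorm2 (z - y).

Definition normal_cone (S : set vec) (x : vec) : set vec :=
  [set g | S x /\ forall z, S z -> dotv g (z - x) <= 0].

Definition dagp_step (M : nat) (W Q : 'M[R]_M) (mu rho alpha : R)
    (S : 'I_M -> set vec) (df : 'I_M -> vec -> vec)
    (x g h x' g' h' : 'I_M -> vec) : Prop :=
  forall v : 'I_M,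
    let z := x v - \sum_(u < M) W v u *: x u - mu *: (df v (x v) - g v) in
    is_proj (S v) z (x' v) /\
    g' v = g v + rho *: (df v (x v) - g v + mu^-1 *: (z - x' v))
               + alpha *: (h v - g v) /\
    h' v = h v - \sum_(u < M) Q v u *: (h u - g u).

End DAGPDefs.

(* Main.v *)
Require Import Defs.
From HB Require Import structures.
From mathcomp Require Import all_boot all_order all_algebra.
From mathcomp Require Import all_classical all_reals all_analysis.
From mathcomp Require Import lra ring.
Import Order.TTheory GRing.Theory Num.Theory.
Import numFieldNormedType.Exports.
Local Open Scope classical_set_scope.
Local Open Scope ring_scope.
Lemma cvx_grad_ineq (R : realType) (m : nat) (f : 'rV[R]_m -> R) x y :
  cvx_fun f -> differentiable f x -> 'D_(y - x) f x <= f y - f x.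
Proof.
move=> cf dfx.
have hd := diff_derivable (v:=y - x) dfx.
rewrite /derive.
set q := (fun h : R => _).
have cq : q @ 0^' --> lim (q @ 0^') by [].
have cq' : q @ 0^'+ --> lim (q @ 0^').
  apply: cvg_trans cq; apply: cvg_fmap2; apply: within_subset => u /= /lt0r_neq0 //.
apply: (cvgr_to_le cq').
near=> t.
have t0 : 0 < t by near: t; exact: nbhs_right_gt.
have t1 : t <= 1 by near: t; exact: nbhs_right_le.
rewrite /q /= /shift.
have -> : t *: (y - x) + x = t *: y + (1 - t) *: x.
  by rewrite scalerBr scalerBl scale1r -addrA [- _ + x]addrC.
have := cf y x t; rewrite (ltW t0) t1 => /(_ isT) H.
have -> : t^-1 *: (f (t *: y + (1 - t) *: x) - f x) = t^-1 * (f (t *: y + (1 - t) *: x) - f x) by [].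
rewrite -(ler_pM2l t0) mulrA mulfV ?lt0r_neq0 // mul1r.
lra.
Unshelve. all: by end_near. Qed.

Lemma sqnorm2_ge0 (R : realType) (m : nat) (b : 'rV[R]_m) : 0 <= sqnorm2 b.
Proof. by apply: sumr_ge0 => i _; rewrite -expr2 sqr_ge0. Qed.

Lemma sqnorm2_expand (R : realType) (m : nat) (a b : 'rV[R]_m) (t : R) :
  sqnorm2 (a + t *: b) = sqnorm2 a + 2 * t * dotv a b + t ^+ 2 * sqnorm2 b.
Proof.
rewrite /sqnorm2 /dotv !mulr_sumr -!big_split; apply: eq_bigr => i _.
rewrite !mxE /=; ring.
Qed.

Lemma proj_normal (R : realType) (m : nat) (S : set 'rV[R]_m) y p :
  cvx_set S -> is_proj S y p -> forall z, S z -> dotv (y - p) (z - p) <= 0.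
Proof.
move=> cS [Sp pmin] z Sz.
have eqd : dotv (y - p) (z - p) = - dotv (p - y) (z - p).
  rewrite /dotv -sumrN; apply: eq_bigr => i _; rewrite !mxE; ring.
set a := dotv (y - p) (z - p).
set N := sqnorm2 (z - p).
have N0 : 0 <= N by apply: sqnorm2_ge0.
have key : forall t, 0 < t <= 1 -> 2 * a <= t * N.
  move=> t /andP[t0 t1].
  have := pmin _ (cS z p t Sz Sp _); rewrite (ltW t0) t1 => /(_ isT).
  have -> : t *: z + (1 - t) *: p - y = (p - y) + t *: (z - p).
    by rewrite scalerBl scale1r scalerBr; apply/rowP => i; rewrite !mxE; ring.
  rewrite sqnorm2_expand -/N -[dotv (p - y) _]opprK -eqd -/a => H.
  have H2 : 0 <= t * (t * N - 2 * a) by lra.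
  by rewrite -subr_ge0; rewrite pmulr_rge0 in H2.
rewrite leNgt; apply/negP => a0.
have aN0 : 0 < a + N by lra.
have := key (a / (a + N)).
have t0 : 0 < a / (a + N) by rewrite divr_gt0.
have t1 : a / (a + N) <= 1 by rewrite ler_pdivrMr // mul1r; lra.
rewrite t0 t1 => /(_ isT).
rewrite mulrAC ler_pdivlMr //.
nra.
Qed.
Lemma gentry (R : realType) (m M : nat) (df : 'I_M -> 'rV[R]_m -> 'rV[R]_m)
  (W : 'M[R]_M) (mu rho alpha : R) (x g h : 'I_M -> 'rV[R]_m) v j :
  0 < mu ->
  let z := x v - \sum_(u < M) W v u *: x u - mu *: (df v (x v) - g v) in
  g v = g v + rho *: (df v (x v) - g v + mu^-1 *: (z - x v))
               + alpha *: (h v - g v) ->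
  alpha * (h v 0 j - g v 0 j) = rho * mu^-1 * (\sum_u W v u * x u 0 j).
Proof.
move=> mu0 z /(congr1 (fun A : 'rV[R]_m => A 0 j)).
rewrite /z !mxE summxE.
under eq_bigr => u _ do rewrite mxE.
set E := \sum_(_ < _) _.
set d := df v (x v) 0 j.
have mu1 : mu^-1 * (x v 0 j - E - mu * (d - g v 0 j) - x v 0 j) = - (mu^-1 * E) - (d - g v 0 j).
  by field; rewrite lt0r_neq0.
rewrite mu1.
move=> H.
have : alpha * (h v 0 j - g v 0 j) = rho * (mu^-1 * E) by lra.
by rewrite mulrA.
Qed.

Lemma hentry (R : realType) (m M : nat) (Q : 'M[R]_M) (g h : 'I_M -> 'rV[R]_m) v j :
  h v = h v - \sum_(u < M) Q v u *: (h u - g u) ->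
  \sum_u Q v u * (h u 0 j - g u 0 j) = 0.
Proof.
move=> /(congr1 (fun A : 'rV[R]_m => A 0 j)).
rewrite !mxE summxE.
under eq_bigr => u _ do rewrite !mxE.
move=> H; lra.
Qed.

Lemma dotvZl (R : realType) (m : nat) (a : R) (u w : 'rV[R]_m) :
  dotv (a *: u) w = a * dotv u w.
Proof. by rewrite /dotv mulr_sumr; apply: eq_bigr => i _; rewrite mxE mulrA. Qed.

Lemma dotvDl (R : realType) (m : nat) (u u' w : 'rV[R]_m) :
  dotv (u + u') w = dotv u w + dotv u' w.
Proof. by rewrite /dotv -big_split; apply: eq_bigr => i _; rewrite mxE mulrDl. Qed.

Lemma dotv_suml (R : realType) (m M : nat) (a : 'I_M -> 'rV[R]_m) (w : 'rV[R]_m) :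
  dotv (\sum_(v < M) a v) w = \sum_(v < M) dotv (a v) w.
Proof.
rewrite /dotv exchange_big; apply: eq_bigr => i _.
by rewrite summxE mulr_suml.
Qed.

Lemma dotv0l (R : realType) (m : nat) (w : 'rV[R]_m) : dotv 0 w = 0.
Proof. by rewrite /dotv big1 // => i _; rewrite mxE mul0r. Qed.

Theorem theorem1 (R : realType) (m M : nat)
  (f : 'I_M -> 'rV[R]_m -> R) (df : 'I_M -> 'rV[R]_m -> 'rV[R]_m)
  (S : 'I_M -> set 'rV[R]_m)
  (W Q : 'M[R]_M) (mu rho alpha : R)
  (x g h : 'I_M -> 'rV[R]_m) :
  (forall v, cvx_fun (f v)) ->
  (forall v, is_gradient (f v) (df v)) ->
  (forall v, S v !=set0 /\ closed (S v) /\ cvx_set (S v)) ->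
  0 < mu -> 0 < rho -> 0 < alpha ->
  (forall v : 'I_M, \sum_(u < M) W v u = 0) ->
  (forall u : 'I_M, \sum_(v < M) Q v u = 0) ->
  (forall c : 'cV[R]_M, Q *m c = 0 <-> W^T *m c = 0) ->
  (forall c : 'cV[R]_M, W *m c = 0 <-> exists a : R, c = a *: const_mx 1) ->
  dagp_step W Q mu rho alpha S df x g h x g h ->
  \sum_(v < M) h v = 0 ->
  exists xs : 'rV[R]_m,
    (forall v, S v xs) /\ (forall v, x v = xs) /\
    (exists n : 'I_M -> 'rV[R]_m,
        (forall v, normal_cone (S v) xs (n v)) /\
        \sum_(v < M) (n v + df v xs) = 0) /\
    (forall y : 'rV[R]_m, (forall v, S v y) ->
        M%:R^-1 * \sum_(v < M) f v xs <= M%:R^-1 * \sum_(v < M) f v y).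
Proof.
move=> cvxf grad HS mu0 rho0 al0 Wrow Qcol QW Wker step hsum.
have Gj : forall v j, alpha * (h v 0 j - g v 0 j) = rho * mu^-1 * (\sum_u W v u * x u 0 j).
  move=> v j; have [_ [Hg _]] := step v; exact: gentry mu0 Hg.
have Hj : forall v j, \sum_u Q v u * (h u 0 j - g u 0 j) = 0.
  move=> v j; have [_ [_ Hh]] := step v; exact: hentry Hh.
have krm : rho * mu^-1 != 0 by rewrite mulf_neq0 ?invr_eq0 ?lt0r_neq0.
have key : forall j, (forall v, h v 0 j = g v 0 j) /\ (forall u v, x u 0 j = x v 0 j).
  move=> j.
  pose c : 'cV[R]_M := \col_u (h u 0 j - g u 0 j).
  have Qc : Q *m c = 0.
    apply/colP => v; rewrite !mxE; apply: eq_trans (Hj v j); apply: eq_bigr => u _; by rewrite mxE.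
  have Wc := (QW c).1 Qc.
  have Wcu : forall u, \sum_v W v u * (h v 0 j - g v 0 j) = 0.
    move=> u; have := congr1 (fun A : 'cV[R]_M => A u 0) Wc; rewrite !mxE => E.
    apply: (eq_trans _ E).
    by apply: eq_bigr => v _; rewrite !mxE.
  have s0 : \sum_v (\sum_u W v u * x u 0 j) * (h v 0 j - g v 0 j) = 0.
    under eq_bigr => v _ do rewrite mulr_suml.
    rewrite exchange_big /=; apply: big1 => u _.
    transitivity (x u 0 j * \sum_v W v u * (h v 0 j - g v 0 j)); last by rewrite Wcu mulr0.
    by rewrite mulr_sumr; apply: eq_bigr => v _; ring.
  have s1 : \sum_v alpha * (h v 0 j - g v 0 j) ^+ 2 = 0.
    transitivity (rho * mu^-1 * \sum_v (\sum_u W v u * x u 0 j) * (h v 0 j - g v 0 j)); last by rewrite s0 mulr0.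
    rewrite mulr_sumr; apply: eq_bigr => v _.
    by rewrite mulrA -Gj; ring.
  have c0 : forall v, h v 0 j = g v 0 j.
    move=> v.
    have hh : (forall i : 'I_M, true -> 0 <= alpha * (h i 0 j - g i 0 j) ^+ 2).
      by move=> i _; rewrite mulr_ge0 ?sqr_ge0 ?ltW.
    move: (psumr_eq0P hh s1 (i:=v) isT) => /eqP; rewrite mulf_eq0 (negbTE (lt0r_neq0 al0)) /= sqrf_eq0 subr_eq0.
    by move/eqP.
  have E0 : forall v, \sum_u W v u * x u 0 j = 0.
    move=> v; have := Gj v j; rewrite c0 subrr mulr0 => /esym/eqP.
    by rewrite mulf_eq0 (negbTE krm) /= => /eqP.
  split=> //.
  pose yy : 'cV[R]_M := \col_u x u 0 j.
  have Wy : W *m yy = 0.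
    apply/colP => v; rewrite !mxE; apply: eq_trans (E0 v).
    by apply: eq_bigr => u _; rewrite !mxE.
  have [a ya] := (Wker yy).1 Wy.
  have xa : forall u, x u 0 j = a.
    by move=> u; have := congr1 (fun A : 'cV[R]_M => A u 0) ya; rewrite !mxE mulr1.
  by move=> u v; rewrite !xa.
destruct M as [|k].
  exists 0; split; first by case.
  split; first by case.
  split; first by exists (fun _ => 0); split; [case | rewrite big_ord0].
  by move=> y _; rewrite !big_ord0.
pose xs := x ord0.
have xeq : forall v, x v = xs by move=> v; apply/rowP => j; exact: (key j).2.
have heq : forall v, h v = g v by move=> v; apply/rowP => j; exact: (key j).1.
pose n := fun v => mu^-1 *: ((x v - \sum_(u < k.+1) W v u *: x u - mu *: (df v (x v) - g v)) - x v).
have Sxs : forall v, S v xs.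
  by move=> v; have [[Hp _] _] := step v; rewrite -(xeq v).
have NC : forall v w, S v w -> dotv (n v) (w - xs) <= 0.
  move=> v w Sw; rewrite /n dotvZl -(xeq v).
  have [Hp _] := step v.
  have [_ [_ cS]] := HS v.
  apply: mulr_ge0_le0; first by rewrite invr_ge0 ltW.
  exact: proj_normal cS Hp w Sw.
have nsum : forall v, n v + df v xs = h v.
  move=> v; have [_ [Hg _]] := step v.
  rewrite (heq v) subrr scaler0 addr0 in Hg.
  have X0 : rho *: (df v (x v) - g v + mu^-1 *:
     (x v - \sum_(u < k.+1) W v u *: x u - mu *: (df v (x v) - g v) - x v)) = 0.
    by apply/(addrI (g v)); rewrite addr0 -Hg.
  move/eqP: X0; rewrite scaler_eq0 (negbTE (lt0r_neq0 rho0)) /= => /eqP X0.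
  rewrite heq /n -(xeq v); apply/rowP => j.
  have := congr1 (fun A : 'rV[R]_m => A 0 j) X0.
  rewrite !mxE => H; lra.
exists xs; split=> //; split=> //; split.
  exists n; split; first by move=> v; split=> // w Sw; exact: NC.
  by rewrite (eq_bigr _ (fun v _ => nsum v)).
move=> y Sy.
apply: ler_wpM2l; first by rewrite invr_ge0 ler0n.
have H1 : forall v, dotv (df v xs) (y - xs) <= f v y - f v xs.
  move=> v; have [dif Dv] := grad v xs; rewrite -Dv.
  exact: cvx_grad_ineq.
have H2 : 0 <= \sum_v dotv (df v xs) (y - xs).
  have : \sum_v (dotv (n v) (y - xs) + dotv (df v xs) (y - xs)) = 0.
    rewrite (eq_bigr (fun v => dotv (n v + df v xs) (y - xs))); last by move=> v _; rewrite dotvDl.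
    by rewrite -dotv_suml (eq_bigr _ (fun v _ => nsum v)) hsum dotv0l.
  rewrite big_split /= => E.
  have : \sum_v dotv (n v) (y - xs) <= 0.
    by rewrite -oppr_ge0 -sumrN; apply: sumr_ge0 => v _; rewrite oppr_ge0 NC.
  lra.
rewrite -subr_ge0 -sumrB; apply: le_trans H2 _; apply: ler_sum => v _; exact: H1.
Qed.
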